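(* Let $r,k\geq2$ be integers with $(r,k)\neq(2,2)$. Then $\zeta<r(k-1)$, where $\zeta=r\beta/\alpha$.
   Context: $f_t(\mu)=e^{-\mu}\sum_{i\geq t}\mu^i/i!$. $\mu_{r,k}$ is the unique minimizer over $\mu>0$ of $\mu/f_{k-1}(\mu)^{r-1}$, $\alpha=f_k(\mu_{r,k})$ and $\beta=\frac1r\mu_{r,k}f_{k-1}(\mu_{r,k})$; thus $\zeta=\mu_{r,k}f_{k-1}(\mu_{r,k})/f_k(\mu_{r,k})$. *)

(* Defs.v *)
From Stdlib Require Import Reals ClassicalEpsilon.
From Coquelicot Require Import Coquelicot.
Open Scope R_scope.

Definition f (t : nat) (mu : R) : R :=
  exp (- mu) * Series (fun i => if Nat.leb t i then mu ^ i / INR (Factorial.fact i) else 0).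

Definition obj (r k : nat) (mu : R) : R := mu / (f (k - 1) mu) ^ (r - 1).

Definition is_min_obj (r k : nat) (mu : R) : Prop :=
  0 < mu /\ forall x, 0 < x -> obj r k mu <= obj r k x.

Definition mu_rk (r k : nat) : R :=
  epsilon (inhabits 0) (is_min_obj r k).

Definition alpha (r k : nat) : R := f k (mu_rk r k).
Definition beta (r k : nat) : R := / INR r * (mu_rk r k * f (k - 1) (mu_rk r k)).
Definition zeta (r k : nat) : R := INR r * beta r k / alpha r k.

(* Main.v *)
Require Import Defs.
From Stdlib Require Import Reals.
Open Scope R_scope.
From Stdlib Require Import Lra Lia Psatz ClassicalEpsilon.
From Coquelicot Require Import Coquelicot.
Open Scope R_scope.


Definition bb (x : R) (i : nat) : R := x ^ i / INR (Factorial.fact i).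
Definition Sn (j : nat) (x : R) : R := sum_f_R0 (bb x) j.

Lemma exp_series x : is_series (bb x) (exp x).
Proof.
  generalize (is_exp_Reals x). unfold is_pseries. apply is_series_ext.
  intro n. unfold bb. rewrite pow_n_pow. unfold scal; simpl. unfold mult; simpl. lra.
Qed.

Lemma sum_n_R (a : nat -> R) n : sum_n a n = sum_f_R0 a n.
Proof. apply sum_n_Reals. Qed.

Lemma tail_series t x : (1 <= t)%nat ->
  is_series (fun i => if Nat.leb t i then bb x i else 0) (exp x - Sn (t-1) x).
Proof.
  intro Ht.
  apply (is_series_decr_n _ t). lia.
  assert (H0 : sum_n (fun i => if Nat.leb t i then bb x i else 0) (Init.Nat.pred t) = 0).
  { rewrite sum_n_R.
    assert (forall j, (j < t)%nat -> sum_f_R0 (fun i => if Nat.leb t i then bb x i else 0) j = 0).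
    { induction j; intro Hj; simpl.
      - destruct (Nat.leb t 0) eqn:E; [apply Nat.leb_le in E; lia | reflexivity].
      - rewrite IHj by lia. destruct (Nat.leb t (S j)) eqn:E; [apply Nat.leb_le in E; lia | lra]. }
    destruct t. lia. apply H. lia. }
  match goal with |- is_series _ ?L => replace L with (exp x - Sn (t - 1) x) end.
  2:{ unfold plus, opp; simpl. transitivity (exp x - Sn (t-1) x + - 0); [ring | f_equal; f_equal; exact (eq_sym H0)]. }
  apply is_series_ext with (fun k => bb x (t + k)).
  { intro n. destruct (Nat.leb t (t+n)) eqn:E; [reflexivity | apply Nat.leb_gt in E; lia]. }
  apply (is_series_incr_n (bb x) t). lia.
  match goal with |- is_series _ ?L => replace L with (exp x) end.
  apply exp_series.
  unfold plus; simpl. rewrite sum_n_R. unfold Sn. replace (Init.Nat.pred t) with (t-1)%nat by lia.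
  unfold plus, opp; simpl. unfold zero; simpl. ring.
Qed.

Lemma f_closed t x : (1 <= t)%nat -> Defs.f t x = 1 - exp (- x) * Sn (t-1) x.
Proof.
  intro Ht. unfold Defs.f. 
  replace (Series _) with (exp x - Sn (t-1) x) by (symmetry; apply is_series_unique; exact (tail_series t x Ht)).

  rewrite Rmult_minus_distr_l, exp_Ropp, Rinv_l. ring. apply Rgt_not_eq, exp_pos.
Qed.
Lemma fact_pos' n : 0 < INR (Factorial.fact n).
Proof. apply lt_0_INR, Factorial.lt_O_fact. Qed.

Lemma bb_derive j x : is_derive (fun y => bb y (S j)) x (bb x j).
Proof.
  unfold bb. auto_derive. exact I.
  generalize (fact_pos' j) (pos_INR j). intros. rewrite plus_INR, mult_INR.
  destruct j. simpl; field. 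
  field. split; nra.
Qed.

Lemma Sn_derive j x : is_derive (Sn j) x (Sn j x - bb x j).
Proof.
  induction j.
  - unfold Sn; simpl. replace (bb x 0 - bb x 0) with 0 by ring.
    apply is_derive_ext with (fun _ => 1).
    intro t. unfold bb. simpl. field.
    auto_derive. exact I. reflexivity.
  - apply is_derive_ext with (fun y => Sn j y + bb y (S j)).
    intro t. unfold Sn. simpl. reflexivity.
    replace (Sn (S j) x - bb x (S j)) with ((Sn j x - bb x j) + bb x j).
    exact (is_derive_plus _ _ _ _ _ IHj (bb_derive j x)).
    unfold Sn; simpl. ring.
Qed.

Lemma series_nonneg (a : nat -> R) (l : R) : is_series a l -> (forall n, 0 <= a n) -> 0 <= l.
Proof.
  intros H Hp. rewrite <- (is_series_unique _ _ H).
  assert (E : Series (fun n => 0 * a n) = 0) by (rewrite Series_scal_l; ring).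
  rewrite <- E. apply Series_le. intro n. split. rewrite Rmult_0_l; lra. rewrite Rmult_0_l; apply Hp.
  exists l. exact H.
Qed.

Lemma partial_le (a : nat -> R) (l : R) n : is_series a l -> (forall n, 0 <= a n) -> sum_f_R0 a n <= l.
Proof.
  intros H Hp.
  assert (H1 : is_series (fun k => a (S n + k)%nat) (l - sum_f_R0 a n)).
  { apply is_series_incr_n. lia. simpl pred. 
    match goal with |- is_series _ ?L => replace L with l end. exact H.
    unfold plus; simpl. rewrite sum_n_R. ring. }
  assert (0 <= l - sum_f_R0 a n). apply (series_nonneg _ _ H1). intro; apply Hp.
  lra.
Qed.

Lemma bb_nonneg x i : 0 <= x -> 0 <= bb x i.
Proof. intro. unfold bb. apply Rdiv_le_0_compat. apply pow_le; auto. apply fact_pos'. Qed.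

Lemma bb_pos x i : 0 < x -> 0 < bb x i.
Proof. intro. unfold bb. apply Rdiv_lt_0_compat. apply pow_lt; auto. apply fact_pos'. Qed.

Lemma Sn_lt_exp j x : 0 < x -> Sn j x < exp x.
Proof.
  intro Hx. apply Rlt_le_trans with (Sn (S j) x).
  unfold Sn. simpl. generalize (bb_pos x (S j) Hx). lra.
  apply partial_le. apply exp_series. intro; apply bb_nonneg; lra.
Qed.

Lemma Sn_nonneg j x : 0 <= x -> 0 <= Sn j x.
Proof. intro. unfold Sn. induction j; simpl. apply bb_nonneg; auto. generalize (bb_nonneg x (S j) H). lra. Qed.

Lemma f_pos t x : (1 <= t)%nat -> 0 < x -> 0 < Defs.f t x.
Proof.
  intros Ht Hx. rewrite f_closed by auto.
  generalize (Sn_lt_exp (t-1) x Hx). intro.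
  assert (exp (-x) * Sn (t-1) x < exp (-x) * exp x) by (apply Rmult_lt_compat_l; [apply exp_pos | auto]).
  rewrite exp_Ropp, Rinv_l in H0 by (apply Rgt_not_eq, exp_pos). rewrite exp_Ropp. lra.
Qed.

Lemma f_le1 t x : (1 <= t)%nat -> 0 < x -> Defs.f t x <= 1.
Proof.
  intros Ht Hx. rewrite f_closed by auto.
  generalize (Sn_nonneg (t-1) x (Rlt_le _ _ Hx)) (exp_pos (-x)). intros. nra.
Qed.

Lemma f_derive j x : is_derive (Defs.f (S j)) x (exp (-x) * bb x j).
Proof.
  apply is_derive_ext with (fun y => 1 - exp (-y) * Sn j y).
  { intro t. rewrite f_closed by lia. replace (S j - 1)%nat with j by lia. reflexivity. }
  auto_derive. exists (Sn j x - bb x j). apply Sn_derive.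
  replace (Derive (fun x0 : R => Sn j x0) x) with (Sn j x - bb x j). ring.
  symmetry. apply is_derive_unique. apply Sn_derive.
Qed.

Lemma f_succ j x : Defs.f (S (S j)) x = Defs.f (S j) x - exp (-x) * bb x (S j).
Proof.
  rewrite !f_closed by lia. replace (S (S j) - 1)%nat with (S j) by lia.
  replace (S j - 1)%nat with j by lia. unfold Sn; simpl. ring.
Qed.

Lemma f_small t x : (1 <= t)%nat -> 0 < x -> x <= 1 -> Defs.f t x <= 3 * x ^ t.
Proof.
  intros Ht Hx Hx1. unfold Defs.f.
  set (a := fun i => if Nat.leb t i then x ^ i / INR (Factorial.fact i) else 0).
  assert (Ha : forall i, 0 <= a i <= x ^ t * bb 1 i).
  { intro i. unfold a, bb. destruct (Nat.leb t i) eqn:E.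
    - apply Nat.leb_le in E. generalize (fact_pos' i). intro. split.
      apply Rdiv_le_0_compat; [apply pow_le; lra | auto].
      rewrite pow1. unfold Rdiv. rewrite Rmult_1_l. apply Rmult_le_compat_r. left; apply Rinv_0_lt_compat; auto.
      replace i with (t + (i - t))%nat by lia. rewrite pow_add.
      assert (x ^ (i - t) <= 1) by (rewrite <- (pow1 (i-t)); apply pow_incr; lra).
      generalize (pow_le x t (Rlt_le _ _ Hx)). nra.
    - split. lra. apply Rmult_le_pos. apply pow_le; lra. apply Rdiv_le_0_compat. rewrite pow1; lra. apply fact_pos'. }
  assert (Hs : Series a <= Series (fun i => x ^ t * bb 1 i)).
  { apply Series_le. exact Ha. exists (x ^ t * exp 1). 
    generalize (is_series_scal (x ^ t) _ _ (exp_series 1)). apply is_series_ext. reflexivity. }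
  rewrite Series_scal_l in Hs. rewrite (is_series_unique _ _ (exp_series 1)) in Hs.
  assert (H0 : 0 <= Series a).
  { replace (Series a) with (exp x - Sn (t-1) x) by (symmetry; apply is_series_unique; exact (tail_series t x Ht)).
    apply series_nonneg with (fun i => if Nat.leb t i then bb x i else 0). apply tail_series; auto.
    intro i; destruct (Nat.leb t i); [apply bb_nonneg; lra | lra]. }
  assert (H1 : exp (- x) <= 1) by (rewrite <- exp_0; left; apply exp_increasing; lra).
  generalize exp_le_3 (pow_le x t (Rlt_le _ _ Hx)) (exp_pos (-x)). intros. fold a. nra.
Qed.

Definition aa (m j : nat) : R := INR (Factorial.fact m) / INR (Factorial.fact (m + j)).

Lemma shift_series m x : (1 <= m)%nat -> is_series (fun k => bb x (m + k)) (exp x - Sn (m-1) x).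
Proof.
  intro Hm. apply (is_series_incr_n (bb x) m). lia.
  match goal with |- is_series _ ?L => replace L with (exp x) end.
  apply exp_series.
  unfold plus; simpl. rewrite sum_n_R. unfold Sn. replace (Init.Nat.pred m) with (m-1)%nat by lia. ring.
Qed.

Lemma G_series m x : (1 <= m)%nat -> 0 < x ->
  is_series (fun j => x ^ j * aa m j) ((exp x - Sn (m-1) x) / bb x m).
Proof.
  intros Hm Hx.
  generalize (is_series_scal (/ bb x m) _ _ (shift_series m x Hm)).
  intro H. 
  match goal with |- is_series _ ?L => replace L with (scal (/ bb x m) (exp x - Sn (m - 1) x)) end.
  revert H. apply is_series_ext. intro j. unfold scal; simpl. unfold mult; simpl.
  unfold bb, aa. rewrite pow_add. generalize (fact_pos' m) (fact_pos' (m+j)) (pow_lt x m Hx). intros.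
  field. repeat split; lra.
  unfold scal; simpl. unfold mult; simpl. unfold Rdiv. ring.
Qed.

Lemma aa_0 m : aa m 0 = 1.
Proof. unfold aa. rewrite Nat.add_0_r. field. apply Rgt_not_eq, fact_pos'. Qed.

Lemma aa_S m j : aa m (S j) = aa m j / INR (m + S j).
Proof.
  unfold aa. replace (m + S j)%nat with (S (m + j)) by lia. rewrite fact_simpl, mult_INR.
  generalize (fact_pos' m) (fact_pos' (m+j)) (pos_INR (m + j)). intros. rewrite S_INR.
  field. lra.
Qed.

Lemma aa_pos m j : 0 < aa m j.
Proof. unfold aa. apply Rdiv_lt_0_compat; apply fact_pos'. Qed.

Lemma bern x M j : 0 <= x -> 0 < M -> M ^ j + INR j * M ^ (pred j) * (x - M) <= x ^ j.
Proof.
  intros Hx HM. induction j.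
  - simpl. lra.
  - destruct j.
    + simpl. lra.
    + simpl pred in *. rewrite S_INR. 
      change (x ^ S (S j)) with (x * x ^ S j).
      change (M ^ S (S j)) with (M * M ^ S j).
      change (M ^ S j) with (M * M ^ j) in *.
      rewrite S_INR in *.
      generalize (pos_INR j) (pow_lt M j HM). intros.
      assert (x * (M * M ^ j + (INR j + 1) * M ^ j * (x - M)) <= x * x ^ S j) by (apply Rmult_le_compat_l; lra).
      assert (0 <= M ^ j * (INR j + 1) * ((x - M) * (x - M))).
      { apply Rmult_le_pos; [apply Rmult_le_pos; lra | apply Rle_0_sqr]. }
      nra.
Qed.

Lemma D_series m : (1 <= m)%nat ->
  is_series (fun j => INR j * INR m ^ (pred j) * aa m j) 1.
Proof.
  intro Hm. set (M := INR m).
  assert (HM : 0 < M) by (apply lt_0_INR; lia).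
  set (e := fun j => M ^ j * aa m j).
  assert (He : is_series e ((exp M - Sn (m-1) M) / bb M m)) by (apply G_series; auto).
  set (Gm := (exp M - Sn (m-1) M) / bb M m) in *.
  assert (He1 : is_series (fun j => e (S j)) (Gm - e 0%nat)).
  { apply is_series_incr_1. match goal with |- is_series _ ?L => replace L with Gm end. exact He.
    unfold plus; simpl. ring. }
  assert (He2 := is_series_minus _ _ _ _ He He1).
  apply is_series_decr_1.
  match goal with |- is_series _ ?L => replace L with (plus Gm (opp (Gm - e 0%nat))) end.
  revert He2. apply is_series_ext. intro j. unfold plus, opp; simpl. unfold e.
  rewrite aa_S. simpl pred.
  replace (match j with 0%nat => 1 | S _ => INR j + 1 end) with (INR j + 1) by (destruct j; [simpl; ring | reflexivity]).
  replace (INR (m + S j)) with (M + INR j + 1) by (unfold M; rewrite plus_INR, S_INR; ring).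
  generalize (pos_INR j) (aa_pos m j). intros. simpl. field. lra.
  
  unfold plus, opp; simpl. unfold e. rewrite aa_0. simpl. ring.
Qed.

Lemma KL m x : (1 <= m)%nat -> 0 < x ->
  (exp (INR m) - Sn (m-1) (INR m)) / bb (INR m) m - INR m <= (exp x - Sn (m-1) x) / bb x m - x.
Proof.
  intros Hm Hx. set (M := INR m).
  assert (HM : 0 < M) by (apply lt_0_INR; lia).
  assert (Hx' := G_series m x Hm Hx).
  assert (HM' := G_series m M Hm HM).
  assert (HD := D_series m Hm). fold M in HD.
  assert (H1 := is_series_minus _ _ _ _ Hx' HM').
  assert (H2 := is_series_scal (x - M) _ _ HD).
  assert (H3 := is_series_minus _ _ _ _ H1 H2).
  assert (H4 := series_nonneg _ _ H3).
  unfold plus, opp, scal in H4; simpl in H4. unfold mult in H4; simpl in H4.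
  assert (0 <= (exp x - Sn (m - 1) x) / bb x m + - ((exp M - Sn (m - 1) M) / bb M m) + - ((x - M) * 1)).
  { apply H4. intro j. generalize (bern x M j (Rlt_le _ _ Hx) HM) (aa_pos m j). intros. nra. }
  lra.
Qed.

Lemma Gm_bound m : (1 <= m)%nat ->
  let M := INR m in let Gm := (exp M - Sn (m-1) M) / bb M m in
  (m = 1%nat -> Gm - M > 1/2) /\ ((2 <= m)%nat -> Gm > 2).
Proof.
  intros Hm M Gm.
  assert (HM : 0 < M) by (apply lt_0_INR; lia).
  assert (H := partial_le _ _ 3 (G_series m M Hm HM)).
  fold Gm in H.
  specialize (H ltac:(intro j; apply Rmult_le_pos; [apply pow_le; lra | left; apply aa_pos])).
  assert (H0 : Gm >= 1 + M * aa m 1 + M^2 * aa m 2 + M ^ 3 * aa m 3).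
  { assert (0 <= Gm - (1 + M * aa m 1 + M ^ 2 * aa m 2 + M ^ 3 * aa m 3)); [|lra].
    apply Rle_trans with (Gm - sum_f_R0 (fun j => M ^ j * aa m j) 3).
    lra. right. simpl. rewrite aa_0. ring. }
  rewrite !aa_S, aa_0 in H0.
  replace (INR (m + 1)) with (M + 1) in H0 by (unfold M; rewrite plus_INR; simpl; ring).
  replace (INR (m + 2)) with (M + 2) in H0 by (unfold M; rewrite plus_INR; simpl; ring).
  replace (INR (m + 3)) with (M + 3) in H0 by (unfold M; rewrite plus_INR; simpl; ring).
  set (u := M / (M + 1)) in *. set (v := M / (M + 2)). set (w := M / (M + 3)).
  assert (E : 1 + M * (1 / (M + 1)) + M ^ 2 * (1 / (M + 1) / (M + 2)) + M ^ 3 * (1 / (M + 1) / (M + 2) / (M + 3))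
    = 1 + u + u * v + u * v * w) by (unfold u, v, w; field; repeat split; lra).
  rewrite E in H0.
  assert (Hu : u * (M + 1) = M) by (unfold u; field; lra).
  assert (Hv : v * (M + 2) = M) by (unfold v; field; lra).
  assert (Hw : w * (M + 3) = M) by (unfold w; field; lra).
  split.
  - intro Hm1. assert (M = 1) by (unfold M; rewrite Hm1; reflexivity).
    assert (u = 1/2) by (subst; nra). assert (v = 1/3) by nra. assert (w = 1/4) by nra.
    subst. nra.
  - intro Hm2. assert (M >= 2) by (unfold M; apply Rle_ge; replace 2 with (INR 2) by (simpl; ring); apply le_INR; auto).
    assert (u >= 2/3) by nra. assert (v >= 1/2) by nra. assert (w >= 2/5) by nra.
    assert (u * v >= 1/3) by nra. assert (u * v * w >= 2/15) by nra. lra.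
Qed.

Lemma obj_derive j n x : 0 < x ->
  is_derive (fun y => y / Defs.f (S j) y ^ n) x
   ((1 * Defs.f (S j) x ^ n - x * (INR n * (exp (-x) * bb x j) * Defs.f (S j) x ^ pred n)) / (Defs.f (S j) x ^ n) ^ 2).
Proof.
  intro Hx.
  assert (Hne : Defs.f (S j) x ^ n <> 0) by (apply pow_nonzero, Rgt_not_eq, f_pos; lia || lra).
  exact (is_derive_div _ _ _ _ _ (is_derive_id x) (is_derive_pow _ n _ _ (f_derive j x)) Hne).
Qed.

Lemma exists_min j n : (1 <= n)%nat -> (2 <= S j * n)%nat ->
  exists mu, 0 < mu /\ forall x, 0 < x -> mu / Defs.f (S j) mu ^ n <= x / Defs.f (S j) x ^ n.
Proof.
  intros Hn Hjn. set (g := fun y => y / Defs.f (S j) y ^ n).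
  assert (Hg : forall y, 0 < y -> 0 < Defs.f (S j) y ^ n <= 1).
  { intros y Hy. split. apply pow_lt, f_pos; lia || lra.
    rewrite <- (pow1 n). apply pow_incr. split. left; apply f_pos; lia || lra. apply f_le1; lia || lra. }
  assert (Hc : forall y, 0 < y -> continuity_pt g y).
  { intros y Hy. apply derivable_continuous_pt.
    exists (((1 * Defs.f (S j) y ^ n - y * (INR n * (exp (-y) * bb y j) * Defs.f (S j) y ^ pred n)) / (Defs.f (S j) y ^ n) ^ 2)).
    apply is_derive_Reals. apply obj_derive; auto. }
  set (O1 := g 1).
  assert (HO1 : 0 < O1). { unfold O1, g. destruct (Hg 1 ltac:(lra)). apply Rdiv_lt_0_compat; lra. }
  set (a := Rmin 1 (/ (3 ^ n * (O1 + 1)))).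
  set (b := Rmax 1 O1 + 1).
  assert (H3n : 0 < 3 ^ n) by (apply pow_lt; lra).
  assert (Ha0 : 0 < a). { unfold a. apply Rmin_glb_lt. lra. apply Rinv_0_lt_compat. nra. }
  assert (Ha1 : a <= 1) by apply Rmin_l.
  assert (Hb1 : 1 <= b) by (unfold b; generalize (Rmax_l 1 O1); lra).
  assert (HbO : O1 < b) by (unfold b; generalize (Rmax_r 1 O1); lra).
  destruct (continuity_ab_min g a b) as [mx [Hmx Hmxab]]. lra.
  { intros c Hcab. apply Hc. lra. }
  assert (Hmx1 : g mx <= O1) by (apply Hmx; lra).
  exists mx. split. lra.
  intros x Hx. fold (g mx). fold (g x).
  destruct (Rlt_or_le x a) as [Hxa | Hxa].
  -
    assert (Hxa' : x * (3 ^ n * (O1 + 1)) < 1).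
    { assert (x < / (3 ^ n * (O1 + 1))) by (apply Rlt_le_trans with a; [auto | apply Rmin_r]).
      apply Rmult_lt_compat_r with (r := 3 ^ n * (O1 + 1)) in H. rewrite Rinv_l in H. lra. nra. nra. }
    assert (Hfs := f_small (S j) x ltac:(lia) Hx ltac:(lra)).
    set (P := Defs.f (S j) x ^ n).
    assert (HP : P <= 3 ^ n * x ^ 2).
    { unfold P. apply Rle_trans with ((3 * x ^ S j) ^ n).
      apply pow_incr. split. left; apply f_pos; lia || lra. auto.
      rewrite Rpow_mult_distr, <- pow_mult. apply Rmult_le_compat_l. lra.
      replace (S j * n)%nat with (2 + (S j * n - 2))%nat by lia. rewrite pow_add.
      assert (x ^ (S j * n - 2) <= 1) by (rewrite <- (pow1 (S j * n - 2)); apply pow_incr; lra).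
      assert (0 <= x ^ 2) by (apply pow_le; lra). nra. }
    destruct (Hg x Hx) as [HP0 _]. fold P in HP0.
    assert (O1 < g x).
    { unfold g. fold P. apply Rmult_lt_reg_r with P. auto. unfold Rdiv. rewrite Rmult_assoc, Rinv_l by lra.
      assert (x ^ 2 = x * x) by ring. nra. }
    lra.
  - destruct (Rle_or_lt x b) as [Hxb | Hxb].
    + apply Hmx. lra.
    + assert (x <= g x).
      { unfold g. destruct (Hg x Hx). apply Rmult_le_reg_r with (Defs.f (S j) x ^ n). auto.
        unfold Rdiv. rewrite Rmult_assoc, Rinv_l by lra. nra. }
      lra.
Qed.

Theorem lemma50 (r k : nat) :
  (2 <= r)%nat -> (2 <= k)%nat -> ~ (r = 2%nat /\ k = 2%nat) ->
  zeta r k < INR r * (INR k - 1).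
Proof.
  intros Hr Hk Hne.
  destruct r as [|n]; [lia|]. destruct k as [|[|j]]; try lia.
  assert (Hn : (1 <= n)%nat) by lia.
  assert (Hjn : (2 <= S j * n)%nat) by (destruct j; destruct n as [|[|n]]; lia).
  set (g := fun y => y / Defs.f (S j) y ^ n).
  assert (Hobj : forall y, obj (S n) (S (S j)) y = g y).
  { intro y. unfold obj, g. replace (S n - 1)%nat with n by lia. replace (S (S j) - 1)%nat with (S j) by lia. reflexivity. }
  destruct (exists_min j n Hn Hjn) as [mu0 [Hmu0 Hmin0]].
  assert (Hmu : is_min_obj (S n) (S (S j)) (mu_rk (S n) (S (S j)))).
  { unfold mu_rk. apply epsilon_spec. exists mu0. split; auto. intros x Hx. rewrite !Hobj. apply Hmin0; auto. }
  unfold zeta, beta, alpha. set (mu := mu_rk (S n) (S (S j))) in *.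
  destruct Hmu as [Hpos Hmin].
  replace (S (S j) - 1)%nat with (S j) by lia.
  set (F := Defs.f (S j) mu).
  set (Fd := exp (-mu) * bb mu j).
  assert (HF : 0 < F) by (apply f_pos; lia || lra).
  assert (Hd := obj_derive j n mu Hpos).
  fold F Fd in Hd. fold g in Hd.
  set (l := (1 * F ^ n - mu * (INR n * Fd * F ^ pred n)) / (F ^ n) ^ 2) in Hd.
  assert (Hl : l = 0).
  { pose (pr := exist (fun l0 => derivable_pt_lim g mu l0) l (proj1 (is_derive_Reals _ _ _) Hd) : derivable_pt g mu).
    assert (Hm' : forall x, 0 < x -> x < mu + 1 -> g mu <= g x) by (intros x Hx _; rewrite <- !Hobj; apply Hmin; auto).
    exact (deriv_minimum g 0 (mu + 1) mu pr Hpos ltac:(lra) Hm'). }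
  assert (HFn : 0 < F ^ pred n) by (apply pow_lt; auto).
  assert (Hcrit : F = mu * INR n * Fd).
  { unfold l in Hl. 
    assert (Hpow : F ^ n = F * F ^ pred n) by (destruct n; [lia | reflexivity]).
    rewrite Hpow in Hl.
    assert (HD : 0 < (F * F ^ pred n) ^ 2) by (apply pow_lt; nra).
    unfold Rdiv in Hl. apply Rmult_integral in Hl. destruct Hl as [Hl | Hl].
    2:{ exfalso. apply (Rinv_neq_0_compat _ (Rgt_not_eq _ _ HD)). exact Hl. }
    assert (F ^ pred n * (F - mu * INR n * Fd) = 0) by (rewrite <- Hl; ring).
    apply Rmult_integral in H. destruct H; [lra | lra]. }
  set (p := exp (- mu) * bb mu (S j)).
  assert (Hp : 0 < p) by (apply Rmult_lt_0_compat; [apply exp_pos | apply bb_pos; auto]).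
  assert (HFd : mu * Fd = INR (S j) * p).
  { unfold Fd, p, bb. rewrite fact_simpl, mult_INR. generalize (fact_pos' j) (pos_INR j). intros.
    simpl pow. rewrite S_INR. field. lra. }
  set (N := INR n). set (Mj := INR (S j)).
  assert (HcF : F = N * Mj * p) by (rewrite Hcrit; transitivity (INR n * (mu * Fd)); [ring | rewrite HFd; unfold N, Mj; ring]).
  rewrite f_succ. fold F p.
  assert (Hc : (exp mu - Sn j mu) / bb mu (S j) = N * Mj).
  { assert (F = exp (- mu) * (exp mu - Sn j mu)).
    { unfold F. rewrite f_closed by lia. replace (S j - 1)%nat with j by lia.
      rewrite Rmult_minus_distr_l, exp_Ropp, Rinv_l by (apply Rgt_not_eq, exp_pos). ring. }
    assert (0 < bb mu (S j)) by (apply bb_pos; auto).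
    assert (0 < exp (- mu)) by apply exp_pos.
    assert (E1 : exp (-mu) * (exp mu - Sn j mu) = exp(-mu) * (N * Mj * bb mu (S j))) by (rewrite <- H, HcF; unfold p; ring).
    apply Rmult_eq_reg_l in E1; [|apply Rgt_not_eq, exp_pos].
    rewrite E1. field. lra. }
  assert (HKL := KL (S j) mu ltac:(lia) Hpos).
  replace (S j - 1)%nat with j in HKL by lia. rewrite Hc in HKL.
  destruct (Gm_bound (S j) ltac:(lia)) as [B1 B2]. fold Mj in B1, B2, HKL.
  replace (S j - 1)%nat with j in B1, B2 by lia.
  assert (HN1 : 1 <= N) by (unfold N; replace 1 with (INR 1) by reflexivity; apply le_INR; lia).
  assert (HMj1 : 1 <= Mj) by (unfold Mj; replace 1 with (INR 1) by reflexivity; apply le_INR; lia).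
  assert (Hc2 : 2 <= N * Mj).
  { unfold N, Mj. rewrite <- mult_INR. replace 2 with (INR 2) by (simpl; ring). apply le_INR. lia. }
  assert (Hkey : N * Mj * (N * Mj - mu + Mj - 1) > Mj).
  { destruct j.
    - specialize (B1 eq_refl). assert (HM1 : Mj = 1) by (unfold Mj; simpl; ring).
      assert (N * Mj - mu > 1/2) by lra. rewrite HM1 in *. nra.
    - specialize (B2 ltac:(lia)). assert (N * Mj - mu + Mj - 1 > 1) by lra.
      assert (N * Mj >= Mj) by nra. nra. }
  rewrite HcF.
  replace (INR (S n)) with (N + 1) by (unfold N; rewrite S_INR; ring).
  replace (INR (S (S j)) - 1) with Mj by (unfold Mj; rewrite (S_INR (S j)); ring).
  assert (E : (N + 1) * (/ (N + 1) * (mu * (N * Mj * p))) / (N * Mj * p - p) = mu * (N * Mj) / (N * Mj - 1)).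
  { field. repeat split; try lra. intro. assert (p * (N * Mj - 1) = 0) by lra.
    apply Rmult_integral in H0. lra. }
  rewrite E.
  apply Rmult_lt_reg_r with (N * Mj - 1). lra.
  unfold Rdiv. rewrite Rmult_assoc, Rinv_l by lra. nra.
Qed.
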